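(* Let $G=(V,E)$ be a path on $n\ge1$ vertices and let $\{A_v\}_{v\in V}$ be events in a probability space. Then \[ \Pr\Big(\bigcup_{v\in V} A_v\Big) \;\ge\; \frac{1}{\lceil n/2\rceil}\Big(\sum_{v\in V}\Pr(A_v) - \sum_{\{v,w\}\in E}\Pr(A_v\cap A_w)\Big). \] *)

(* Defs.v *)
From Stdlib Require Import Reals Lra Lia.
Open Scope R_scope.

Record prob_space := {
  Omega : Type;
  measurable : (Omega -> Prop) -> Prop;
  measurable_full : measurable (fun _ => True);
  measurable_compl : forall A, measurable A -> measurable (fun x => ~ A x);
  measurable_cunion : forall A : nat -> (Omega -> Prop),
      (forall i, measurable (A i)) -> measurable (fun x => exists i, A i x);
  Pr : (Omega -> Prop) -> R;
  Pr_nonneg : forall A, measurable A -> 0 <= Pr A;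
  Pr_full : Pr (fun _ => True) = 1;
  Pr_sigma_additive : forall A : nat -> (Omega -> Prop),
      (forall i, measurable (A i)) ->
      (forall i j, i <> j -> forall x, A i x -> A j x -> False) ->
      infinite_sum (fun i => Pr (A i)) (Pr (fun x => exists i, A i x))
}.

Definition path_vertex (n i : nat) : Prop := (i < n)%nat.
Definition path_edge (n i j : nat) : Prop := (i < n)%nat /\ j = S i /\ (j < n)%nat.

Fixpoint sum_lt (m : nat) (f : nat -> R) : R :=
  match m with
  | O => 0
  | S k => sum_lt k f + f k
  end.

(* Main.v *)
Require Import Defs.
From Stdlib Require Import Reals Lra Lia FunctionalExtensionality PropExtensionality.
Open Scope R_scope.

Section PS.
Variable P : prob_space.

Lemma Pr_ext (X Y : Omega P -> Prop) : (forall x, X x <-> Y x) -> Pr P X = Pr P Y.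
Proof.
  intro H. f_equal. apply functional_extensionality. intro x.
  apply propositional_extensionality. apply H.
Qed.

Lemma meas_empty : measurable P (fun _ => False).
Proof.
  assert (H := measurable_compl P _ (measurable_full P)).
  replace (fun _ : Omega P => False) with (fun x : Omega P => ~ True); auto.
  apply functional_extensionality; intro; apply propositional_extensionality; tauto.
Qed.

Definition two (X Y : Omega P -> Prop) (i : nat) : Omega P -> Prop :=
  match i with 0 => X | 1 => Y | _ => fun _ => False end.

Lemma meas_or X Y : measurable P X -> measurable P Y -> measurable P (fun x => X x \/ Y x).
Proof.
  intros HX HY.
  assert (H := measurable_cunion P (two X Y)).
  replace (fun x => X x \/ Y x) with (fun x => exists i, two X Y i x).
  - apply H. intros [|[|i]]; simpl; auto. apply meas_empty.
  - apply functional_extensionality; intro x; apply propositional_extensionality.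
    split. intros [[|[|i]] Hi]; simpl in Hi; tauto.
    intros [h|h]; [exists 0%nat | exists 1%nat]; exact h.
Qed.

Lemma meas_and X Y : measurable P X -> measurable P Y -> measurable P (fun x => X x /\ Y x).
Proof.
  intros HX HY.
  assert (H := measurable_compl P _ (meas_or _ _ (measurable_compl P _ HX) (measurable_compl P _ HY))).
  replace (fun x => X x /\ Y x) with (fun x => ~ (~ X x \/ ~ Y x)); auto.
  apply functional_extensionality; intro x; apply propositional_extensionality.
  split. intro h. destruct (Classical_Prop.classic (X x)); destruct (Classical_Prop.classic (Y x)); tauto. tauto.
Qed.

Lemma meas_not X : measurable P X -> measurable P (fun x => ~ X x).
Proof. apply measurable_compl. Qed.

Lemma sum_const c n : sum_f_R0 (fun _ => c) n = INR (S n) * c.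
Proof.
  induction n. simpl. ring. simpl sum_f_R0. rewrite IHn. rewrite !S_INR. ring.
Qed.

Lemma Pr_empty : Pr P (fun _ => False) = 0.
Proof.
  set (c := Pr P (fun _ => False)).
  assert (Hc : 0 <= c) by (apply Pr_nonneg, meas_empty).
  assert (H := Pr_sigma_additive P (fun _ => fun _ => False)
     (fun _ => meas_empty) (fun i j _ x h _ => h)).
  assert (E : Pr P (fun _ : Omega P => exists _ : nat, False) = c).
  { apply Pr_ext. intro x. split; [intros [_ h]; exact h| tauto]. }
  cbv beta in H. rewrite E in H.
  fold c in H. simpl in H.
  destruct (Rle_lt_or_eq_dec _ _ Hc) as [Hp|]; [|auto].
  destruct (H c Hp) as [N HN].
  specialize (HN (S N) (Nat.le_succ_diag_r N)).
  rewrite sum_const in HN. unfold R_dist in HN.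
  rewrite !S_INR in HN.
  assert (0 <= INR N) by apply pos_INR.
  replace ((INR N + 1 + 1) * c - c) with (INR N * c + c) in HN by ring.
  assert (0 <= INR N * c) by (apply Rmult_le_pos; lra).
  rewrite Rabs_right in HN; lra.
Qed.

Lemma Pr_add X Y : measurable P X -> measurable P Y ->
  (forall x, X x -> Y x -> False) ->
  Pr P (fun x => X x \/ Y x) = Pr P X + Pr P Y.
Proof.
  intros HX HY Hd.
  assert (H := Pr_sigma_additive P (two X Y)).
  assert (Hm : forall i, measurable P (two X Y i)).
  { intros [|[|i]]; simpl; auto. apply meas_empty. }
  assert (Hdd : forall i j, i <> j -> forall x, two X Y i x -> two X Y j x -> False).
  { intros [|[|i]] [|[|j]] Hij x h1 h2; simpl in *; try tauto; try lia; eauto. }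
  specialize (H Hm Hdd).
  replace (fun x => exists i, two X Y i x) with (fun x => X x \/ Y x) in H.
  2:{ apply functional_extensionality; intro x; apply propositional_extensionality.
    split. intros [h|h]; [exists 0%nat | exists 1%nat]; exact h.
    intros [[|[|i]] Hi]; simpl in Hi; tauto. }
  set (L := Pr P (fun x => X x \/ Y x)) in *.
  assert (Hs : forall m, sum_f_R0 (fun i => Pr P (two X Y i)) (S m) = Pr P X + Pr P Y).
  { induction m. simpl. ring. simpl sum_f_R0 in *. rewrite IHm. simpl.
    rewrite Pr_empty. ring. }
  destruct (Req_dec L (Pr P X + Pr P Y)) as [|Hne]; auto.
  exfalso.
  assert (He : Rabs (L - (Pr P X + Pr P Y)) > 0) by (apply Rabs_pos_lt; lra).
  destruct (H _ He) as [N HN].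
  specialize (HN (S N) (Nat.le_succ_diag_r N)).
  rewrite Hs in HN. unfold R_dist in HN. rewrite Rabs_minus_sym in HN. lra.
Qed.

Lemma Pr_split X Y : measurable P X -> measurable P Y ->
  Pr P X = Pr P (fun x => Y x /\ X x) + Pr P (fun x => X x /\ ~ Y x).
Proof.
  intros HX HY. rewrite <- Pr_add.
  - apply Pr_ext. intro x. destruct (Classical_Prop.classic (Y x)); tauto.
  - apply meas_and; auto.
  - apply meas_and; auto. apply meas_not; auto.
  - intros x [] []; tauto.
Qed.

Lemma Pr_mono X Y : measurable P X -> measurable P Y -> (forall x, X x -> Y x) ->
  Pr P X <= Pr P Y.
Proof.
  intros HX HY Hs. rewrite (Pr_split Y X HY HX).
  replace (Pr P (fun x => X x /\ Y x)) with (Pr P X).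
  2:{ apply Pr_ext. intro x. split; auto. tauto. }
  assert (0 <= Pr P (fun x => Y x /\ ~ X x)).
  { apply Pr_nonneg. apply meas_and; auto. apply meas_not; auto. }
  lra.
Qed.

End PS.

Lemma sum_pairs (b : nat -> R) (u : R) (n : nat) :
  (forall i, (i < n)%nat -> b i <= u) ->
  (forall i, (S i < n)%nat -> b i + b (S i) <= u) ->
  sum_lt n b <= INR ((n + 1) / 2) * u.
Proof.
  revert n. fix IH 1. intros [|[|m]] H1 H2.
  - simpl. lra.
  - simpl. assert (b 0%nat <= u) by (apply H1; lia). lra.
  - replace ((S (S m) + 1) / 2)%nat with (S ((m + 1) / 2)).
    2:{ replace (S (S m) + 1)%nat with (m + 1 + 1 * 2)%nat by lia.
        rewrite Nat.div_add by lia. lia. }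
    rewrite S_INR. simpl sum_lt.
    assert (sum_lt m b <= INR ((m + 1) / 2) * u).
    { apply IH; intros; [apply H1|apply H2]; lia. }
    assert (b m + b (S m) <= u) by (apply H2; lia). lra.
Qed.

Theorem mainTheorem6 (P : prob_space) (n : nat) (Hn : (1 <= n)%nat)
  (A : nat -> (Omega P -> Prop))
  (HA : forall i, (i < n)%nat -> measurable P (A i)) :
  Pr P (fun x => exists i, (i < n)%nat /\ A i x) >=
  / INR ((n + 1) / 2) *
  (sum_lt n (fun i => Pr P (A i))
   - sum_lt (n - 1) (fun i => Pr P (fun x => A i x /\ A (S i) x))).
Proof.
  set (U := fun x => exists i, (i < n)%nat /\ A i x).
  assert (HU : measurable P U).
  { unfold U. apply (measurable_cunion P (fun i x => (i < n)%nat /\ A i x)).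
    intro i. destruct (Compare_dec.lt_dec i n) as [h|h].
    - replace (fun x => (i < n)%nat /\ A i x) with (A i); auto.
      apply functional_extensionality; intro; apply propositional_extensionality; tauto.
    - replace (fun x => (i < n)%nat /\ A i x) with (fun _ : Omega P => False).
      apply meas_empty.
      apply functional_extensionality; intro; apply propositional_extensionality; tauto. }
  set (B := fun i => match i with 0 => A 0%nat | S j => fun x => A (S j) x /\ ~ A j x end).
  assert (HB : forall i, (i < n)%nat -> measurable P (B i)).
  { intros [|j] Hj; simpl. apply HA; lia. apply meas_and. apply HA; lia.
    apply meas_not, HA; lia. }
  assert (HBA : forall i x, B i x -> A i x). { intros [|j] x; simpl; tauto. }
  assert (Heq : forall m, (S m <= n)%nat ->
     sum_lt (S m) (fun i => Pr P (A i)) - sum_lt m (fun i => Pr P (fun x => A i x /\ A (S i) x))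
     = sum_lt (S m) (fun i => Pr P (B i))).
  { induction m; intro Hm.
    - simpl. ring.
    - change (sum_lt (S (S m)) (fun i => Pr P (A i))) with
        (sum_lt (S m) (fun i => Pr P (A i)) + Pr P (A (S m))).
      change (sum_lt (S (S m)) (fun i => Pr P (B i))) with
        (sum_lt (S m) (fun i => Pr P (B i)) + Pr P (B (S m))).
      change (sum_lt (S m) (fun i => Pr P (fun x => A i x /\ A (S i) x))) with
        (sum_lt m (fun i => Pr P (fun x => A i x /\ A (S i) x)) + Pr P (fun x => A m x /\ A (S m) x)).
      rewrite (Pr_split P (A (S m)) (A m)) by (apply HA; lia).
      assert (IH := IHm ltac:(lia)). simpl B. lra. }
  assert (Heq2 := Heq (n - 1)%nat ltac:(lia)).
  replace (S (n - 1)) with n in Heq2 by lia.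
  rewrite Heq2.
  assert (Hs : sum_lt n (fun i => Pr P (B i)) <= INR ((n + 1) / 2) * Pr P U).
  { apply sum_pairs.
    - intros i Hi. apply Pr_mono; auto. intros x h. exists i. auto.
    - intros i Hi. rewrite <- Pr_add; auto; try (apply HB; lia).
      + apply Pr_mono; auto. apply meas_or; apply HB; lia.
        intros x [h|h]; [exists i | exists (S i)]; split; auto; lia.
      + intros x h1 h2. simpl in h2. apply HBA in h1. tauto. }
  assert (Hk : (1 <= (n + 1) / 2)%nat).
  { apply Nat.div_le_lower_bound; lia. }
  apply le_INR in Hk. change (INR 1) with 1 in Hk.
  apply Rle_ge.
  apply (Rmult_le_reg_l (INR ((n + 1) / 2))); [lra|].
  rewrite <- Rmult_assoc, Rinv_r by lra. lra.
Qed.
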